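(* Let $N, K \geq 2$ be integers, let $N_0>0$, $P>0$, $T>0$, fix $i\in\{1,\ldots,K\}$ and let $\mathbf{s}_k\in\mathbb{C}^N$ for $k\neq i$ be given. For $m=1,\ldots,N$ define $$\lambda^{(i)}_m = \sqrt{1+\tfrac12\cos(2\pi \tfrac mN)}\sum_{k=1,k\neq i}^K (\mathbf{s}_k^* Q_m \mathbf{s}_k),\qquad \hat\lambda^{(i)}_m = \sqrt{1+\tfrac12\cos(2\pi(\tfrac mN + \tfrac1{2N}))}\sum_{k=1,k\neq i}^K (\mathbf{s}_k^* \hat Q_m \mathbf{s}_k).$$ Let $\lambda^{(i)}_{\min}$ be the minimum eigenvalue of $\Sigma_i = \sum_{k\neq i}\sum_{m=1}^N[(\mathbf{s}_k^*Q_m\mathbf{s}_k)Q_m + (\mathbf{s}_k^*\hat Q_m\mathbf{s}_k)\hat Q_m]$, and let $$\operatorname{SINR}^\star_i = \max_{\mathbf{s}_i\in\mathbb{C}^N,\ \|\mathbf{s}_i\|^2=N} \left\{ \frac{1}{6N^2}\sum_{k=1, k\neq i}^K \sum_{m=1}^N S_m^{i,k} + \frac{N_0}{2PT}\right\}^{-1/2}.$$ Then $$\min_m \lambda^{(i)}_m + \min_m \hat\lambda^{(i)}_m \le \lambda^{(i)}_{\min} \le \gamma := \min\left\{\min_m \lambda^{(i)}_m + \max_m \hat\lambda^{(i)}_m,\ \max_m\lambda^{(i)}_m + \min_m\hat\lambda^{(i)}_m\right\},$$ and consequently $$\left\{\frac{\gamma}{6N} + \frac{N_0}{2PT}\right\}^{-1/2}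 \le \operatorname{SINR}^\star_i \le \left\{\frac{1}{6N}\left(\min_m \lambda^{(i)}_m + \min_m\hat\lambda^{(i)}_m\right) + \frac{N_0}{2PT}\right\}^{-1/2}.$$
   Context: Indices run over $1,\ldots,N$; $j$ is the imaginary unit and $\mathbf{z}^*$ denotes conjugate transpose. $V$ and $\hat V$ are the $N\times N$ unitary matrices with entries $V_{m,n} = \frac{1}{\sqrt N}\exp(-2\pi j \frac{mn}{N})$ and $\hat V_{m,n} = \frac{1}{\sqrt N}\exp\!\left(-2\pi j n(\frac{m}{N} + \frac{1}{2N})\right)$. For $m=1,\ldots,N$, $C_m$ (resp. $\hat C_m$) is the $N\times N$ diagonal matrix whose only nonzero entry is the $(m,m)$ entry, equal to $\sqrt{1+\frac12\cos(2\pi \frac mN)}$ (resp. $\sqrt{1+\frac12\cos(2\pi(\frac mN+\frac1{2N}))}$). Set $Q_m = V^* C_m V$ and $\hat Q_m = \hat V^* \hat C_m \hat V$. For $\mathbf{s}_i,\mathbf{s}_k\in\mathbb{C}^N$, $S_m^{i,k} = (\mathbf{s}_i^* Q_m \mathbf{s}_i)(\mathbf{s}_k^* Q_m \mathbf{s}_k) + (\mathbf{s}_i^* \hat Q_m \mathbf{s}_i)(\mathbf{s}_k^* \hat Q_m \mathbf{s}_k)$. *)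

(* Defs.v *)
From mathcomp Require Import all_boot all_order all_algebra.
From mathcomp Require Import reals trigo.
From mathcomp Require Export complex.
Set Implicit Arguments. Unset Strict Implicit. Unset Printing Implicit Defensive.
Import Order.TTheory GRing.Theory Num.Theory.
Local Open Scope ring_scope.
Local Open Scope complex_scope.

Section Defs.
Variable R : realType.
Variable N : nat.

Definition expj (t : R) : R[i] := (cos t)%:C + 'i * (sin t)%:C.

Definition adj (m n : nat) (A : 'M[R[i]]_(m, n)) : 'M[R[i]]_(n, m) :=
  (map_mx conjc A)^T.

(* indices m, n : 'I_N stand for the paper's indices m.+1, n.+1 in 1..N *)
Definition Vmx : 'M[R[i]]_N := \matrix_(m, n)
  ((Num.sqrt (N%:R : R))^-1%:C *
   expj (- (2 * pi * ((m.+1 * n.+1)%:R / N%:R)))).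

Definition Vhmx : 'M[R[i]]_N := \matrix_(m, n)
  ((Num.sqrt (N%:R : R))^-1%:C *
   expj (- (2 * pi * (n.+1)%:R * ((m.+1)%:R / N%:R + 1 / (2 * N%:R))))).

Definition cc (m : 'I_N) : R :=
  Num.sqrt (1 + 2^-1 * cos (2 * pi * ((m.+1)%:R / N%:R))).
Definition cch (m : 'I_N) : R :=
  Num.sqrt (1 + 2^-1 * cos (2 * pi * ((m.+1)%:R / N%:R + 1 / (2 * N%:R)))).

Definition Cmx (m : 'I_N) : 'M[R[i]]_N :=
  \matrix_(a, b) (if (a == m) && (b == m) then (cc m)%:C else 0).
Definition Chmx (m : 'I_N) : 'M[R[i]]_N :=
  \matrix_(a, b) (if (a == m) && (b == m) then (cch m)%:C else 0).

Definition Qmx (m : 'I_N) : 'M[R[i]]_N := adj Vmx *m Cmx m *m Vmx.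
Definition Qhmx (m : 'I_N) : 'M[R[i]]_N := adj Vhmx *m Chmx m *m Vhmx.

Definition qf (s : 'cV[R[i]]_N) (Q : 'M[R[i]]_N) : R[i] :=
  (adj s *m Q *m s) 0 0.

(* S_m^{i,k} with s_i = x, s_k = y *)
Definition Smik (x y : 'cV[R[i]]_N) (m : 'I_N) : R[i] :=
  qf x (Qmx m) * qf y (Qmx m) + qf x (Qhmx m) * qf y (Qhmx m).

(* minimum / maximum of a real function over 'I_N (meaningful for N >= 1) *)
Definition min_seq (s : seq R) : R :=
  if s is x :: t then foldr Num.min x t else 0.
Definition max_seq (s : seq R) : R :=
  if s is x :: t then foldr Num.max x t else 0.
Definition minI (f : 'I_N -> R) : R := min_seq [seq f m | m <- enum 'I_N].
Definition maxI (f : 'I_N -> R) : R := max_seq [seq f m | m <- enum 'I_N].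

Definition is_min_eigenvalue (A : 'M[R[i]]_N) (l : R) : Prop :=
  eigenvalue A (l%:C) /\ (forall a, eigenvalue A a -> l%:C <= a).

Definition is_max_on_sphere (f : 'cV[R[i]]_N -> R) (M : R) : Prop :=
  (exists x, (adj x *m x) 0 0 = (N%:R : R[i]) /\ f x = M) /\
  (forall x, (adj x *m x) 0 0 = (N%:R : R[i]) -> f x <= M).

End Defs.
Arguments Vmx {R N}.
Arguments Vhmx {R N}.
Arguments cc {R N}.
Arguments cch {R N}.
Arguments Cmx {R N}.
Arguments Chmx {R N}.
Arguments Qmx {R N}.
Arguments Qhmx {R N}.

(* Main.v *)
Require Import Defs.
From mathcomp Require Import all_boot all_order all_algebra.
From mathcomp Require Import reals trigo complex sesquilinear spectral.
From mathcomp Require Import ring lra.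
Set Implicit Arguments. Unset Strict Implicit. Unset Printing Implicit Defensive.
Import Order.TTheory GRing.Theory Num.Theory.
Local Open Scope ring_scope.
Local Open Scope complex_scope.

Section PA.
Variable R : realType.

Lemma expjE (t : R) : expj t = (cos t +i* sin t).
Proof. by apply/eqP; rewrite eq_complex /=; apply/andP; split; apply/eqP; ring. Qed.

Lemma expjD (t u : R) : expj (t + u) = expj t * expj u.
Proof.
rewrite !expjE cosD sinD; apply/eqP; rewrite eq_complex /=; apply/andP; split; apply/eqP; ring.
Qed.

Lemma expj0 : expj (0:R) = 1.
Proof. by rewrite expjE cos0 sin0. Qed.

Lemma expjJ (t : R) : conjc (expj t) = expj (- t).
Proof. by rewrite !expjE cosN sinN. Qed.

Lemma expjMn (n : nat) (t : R) : expj (n%:R * t) = expj t ^+ n.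
Proof.
elim: n => [|n IH]; first by rewrite mul0r expj0 expr0.
by rewrite -addn1 natrD mulrDl mul1r expjD IH exprD expr1.
Qed.

Lemma expj2pi : expj (2 * pi : R) = 1.
Proof. by rewrite expjE mulr_natl cos2pi sin2pi. Qed.

Lemma expj2piN (k : nat) : expj (2 * pi * k%:R : R) = 1.
Proof. by rewrite mulrC expjMn expj2pi expr1n. Qed.

Lemma expjNK (t : R) : expj (- t) * expj t = 1.
Proof. by rewrite -expjD addNr expj0. Qed.
End PA.


Section PB.
Variable R : realType.

Lemma sin_neq0 (x : R) : 0 < x < pi -> sin x != 0.
Proof. by move=> h; rewrite gt_eqF // sin_gt0_pi. Qed.

Lemma sum_expj (N : nat) (a b : 'I_N) :
  \sum_(n < N) expj ((n.+1)%:R * (2 * pi * ((b%:R - a%:R) / N%:R)) : R)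
  = if a == b then N%:R else 0.
Proof.
have N0 : (0 < N)%N by case: N a {b} => [[]|].
have NR0 : (N%:R : R) != 0 by rewrite pnatr_eq0 -lt0n.
set t := 2 * pi * _.
rewrite (eq_bigr (fun n : 'I_N => expj t ^+ n.+1)); last by move=> n _; rewrite expjMn.
case: eqP => [eab|neq].
  rewrite /t eab subrr mul0r mulr0 expj0.
  rewrite (eq_bigr (fun _ => 1)); last by move=> *; rewrite expr1n.
  by rewrite sumr_const card_ord.
set z := expj t.
have hzN : z ^+ N = 1.
  rewrite /z -expjMn.
  have -> : (N%:R * t) = 2 * pi * b%:R + - (2 * pi * a%:R) by rewrite /t; field.
  by rewrite expjD expj2piN mul1r -[RHS](expjNK (2 * pi * a%:R)) expj2piN mulr1.
have hsin : sin (pi * ((b%:R - a%:R) / N%:R)) != 0 :> R.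
  have hb : (b%:R : R) < N%:R by rewrite ltr_nat.
  have ha : (a%:R : R) < N%:R by rewrite ltr_nat.
  have hN : (0 : R) < N%:R by rewrite ltr0n.
  have ha0 : (0 : R) <= a%:R by rewrite ler0n.
  have hb0 : (0 : R) <= b%:R by rewrite ler0n.
  have hpi : (0 : R) < pi by exact: pi_gt0.
  have [hab|hab|hab] := ssrnat.ltngtP a b; last by exfalso; apply: neq; exact: val_inj.
  1,2: rewrite -(ltr_nat R) in hab.
    apply: sin_neq0; apply/andP; split;
    [apply: mulr_gt0 => //; apply: divr_gt0 => //; lra
    | rewrite -[X in _ < X]mulr1 ltr_pM2l // ltr_pdivrMr //; lra].
  rewrite -oppr_eq0 -sinN; apply: sin_neq0; rewrite -mulrN -mulNr opprB;
    apply/andP; split;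
    [apply: mulr_gt0 => //; apply: divr_gt0 => //; lra
    | rewrite -[X in _ < X]mulr1 ltr_pM2l // ltr_pdivrMr //; lra].
have hz1 : z != 1.
  apply/negP => /eqP hz.
  have : expj (t / 2) ^+ 2 == 1 by rewrite expr2 -expjD -splitr -/z hz.
  rewrite sqrf_eq1 => /orP [] /eqP; rewrite expjE => /(congr1 (@complex.Im _)) /= /eqP;
  rewrite ?oppr0; apply/negP; rewrite /t.
  1,2: have -> : 2 * pi * ((b%:R - a%:R) / N%:R) / 2 = pi * ((b%:R - a%:R) / N%:R) :> R by field.
  1,2: exact: hsin.
have hs : \sum_(n < N) z ^+ n = 0.
  have := subrX1 z N; rewrite hzN subrr => /esym /eqP.
  by rewrite mulf_eq0 subr_eq0 (negbTE hz1) => /eqP.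
under eq_bigr do rewrite exprS.
by rewrite -mulr_sumr hs mulr0.
Qed.
End PB.


Section PC.
Variable R : realType.
Variable N : nat.

Lemma rcM (x y : R) : x%:C * y%:C = (x * y)%:C.
Proof. by apply/eqP; rewrite eq_complex /=; apply/andP; split; apply/eqP; ring. Qed.

Lemma conjcM (x y : R[i]) : conjc (x * y) = conjc x * conjc y.
Proof. exact: rmorphM. Qed.

Lemma natrC (n : nat) : (n%:R : R[i]) = (n%:R : R)%:C.
Proof.
elim: n => [|n IH]; first by apply/eqP; rewrite eq_complex /= eqxx.
rewrite -natr1 IH -natr1; apply/eqP; rewrite eq_complex /=; apply/andP; split; apply/eqP; ring.
Qed.

Lemma ssN : (Num.sqrt (N%:R : R))^-1 * (Num.sqrt (N%:R : R))^-1 = N%:R^-1.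
Proof. by rewrite -invfM -expr2 sqr_sqrtr // ler0n. Qed.

Lemma unit_gen (M : 'M[R[i]]_N) (th : 'I_N -> 'I_N -> R) :
  (forall a n, M a n = (Num.sqrt (N%:R : R))^-1%:C * expj (th a n)) ->
  (forall a b n : 'I_N, th a n - th b n =
      (n.+1)%:R * (2 * pi * ((b%:R - a%:R) / N%:R))) ->
  M *m adj M = 1%:M.
Proof.
move=> hM hth; apply/matrixP => a b; rewrite !mxE.
have NR0 : (N%:R : R) != 0 by rewrite pnatr_eq0 -lt0n; case: N a {hM hth b} => [[]|].
rewrite (eq_bigr (fun n : 'I_N => (N%:R^-1)%:C *
   expj ((n.+1)%:R * (2 * pi * ((b%:R - a%:R) / N%:R))))); last first.
  move=> n _; rewrite /adj !mxE !hM conjcM conjc_real expjJ mulrACA rcM ssN -expjD.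
  by rewrite -hth.
rewrite -mulr_sumr sum_expj; case: eqP => _; last by rewrite mulr0.
by rewrite natrC rcM mulVf.
Qed.

Lemma NR0_of (a : 'I_N) : (N%:R : R) != 0.
Proof. by rewrite pnatr_eq0 -lt0n; case: N a => [[]|]. Qed.

Lemma V_unit : (@Vmx R N) *m adj Vmx = 1%:M.
Proof.
apply: (@unit_gen _ (fun a n => -(2*pi*(((a.+1 * n.+1)%N)%:R / N%:R)))).
  by move=> a n; rewrite mxE.
move=> a b n; have NR0 := NR0_of a.
rewrite !natrM -!natr1; field; exact: NR0.
Qed.

Lemma Vh_unit : (@Vhmx R N) *m adj Vhmx = 1%:M.
Proof.
apply: (@unit_gen _ (fun a n =>
  - (2 * pi * (n.+1)%:R * ((a.+1)%:R / N%:R + 1 / (2 * N%:R))))).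
  by move=> a n; rewrite mxE.
move=> a b n; have NR0 := NR0_of a.
have N20 : (2 * N%:R : R) != 0 by rewrite mulf_neq0 // pnatr_eq0.
rewrite -!natr1; field; exact: NR0.
Qed.

Lemma V_unit' : adj (@Vmx R N) *m Vmx = 1%:M.
Proof. exact: mulmx1C V_unit. Qed.
Lemma Vh_unit' : adj (@Vhmx R N) *m Vhmx = 1%:M.
Proof. exact: mulmx1C Vh_unit. Qed.
End PC.


Section PD.
Variable R : realType.

Lemma min_seqP (x : R) (t : seq R) :
  min_seq (x :: t) \in x :: t /\ forall y, y \in x :: t -> min_seq (x :: t) <= y.
Proof.
rewrite /=; elim: t => [|z t [IH1 IH2]] /=.
  by split; [rewrite inE | move=> y; rewrite inE => /eqP ->].
split.
  case: (leP z (foldr Num.min x t)) => h.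
    by rewrite !inE eqxx orbT.
  move: IH1; rewrite !inE => /orP [->|->] //.
  by rewrite !orbT.
move=> y; rewrite !inE => /or3P [/eqP ->| /eqP -> | hy].
- by rewrite ge_min (IH2 x) ?orbT // inE eqxx.
- by rewrite ge_min lexx.
- by rewrite ge_min (IH2 y) ?orbT // inE hy orbT.
Qed.

Lemma max_seqP (x : R) (t : seq R) :
  max_seq (x :: t) \in x :: t /\ forall y, y \in x :: t -> y <= max_seq (x :: t).
Proof.
rewrite /=; elim: t => [|z t [IH1 IH2]] /=.
  by split; [rewrite inE | move=> y; rewrite inE => /eqP ->].
split.
  case: (leP z (foldr Num.max x t)) => h.
    move: IH1; rewrite !inE => /orP [->|->] //.
    by rewrite !orbT.
  by rewrite !inE eqxx orbT.
move=> y; rewrite !inE => /or3P [/eqP ->| /eqP -> | hy].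
- by rewrite le_max (IH2 x) ?orbT // inE eqxx.
- by rewrite le_max lexx.
- by rewrite le_max (IH2 y) ?orbT // inE hy orbT.
Qed.

Variable N : nat.

Lemma minI_le (f : 'I_N -> R) m : minI f <= f m.
Proof.
rewrite /minI; case E: [seq f m | m <- enum 'I_N] => [|x t].
  by move: (map_f f (mem_enum predT m)); rewrite E.
by apply: (proj2 (min_seqP x t)); rewrite -E map_f ?mem_enum.
Qed.

Lemma maxI_ge (f : 'I_N -> R) m : f m <= maxI f.
Proof.
rewrite /maxI; case E: [seq f m | m <- enum 'I_N] => [|x t].
  by move: (map_f f (mem_enum predT m)); rewrite E.
by apply: (proj2 (max_seqP x t)); rewrite -E map_f ?mem_enum.
Qed.

Lemma minI_ex (f : 'I_N -> R) : (0 < N)%N -> exists m, minI f = f m.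
Proof.
move=> N0; rewrite /minI; case E: [seq f m | m <- enum 'I_N] => [|x t].
  by move: (map_f f (mem_enum predT (Ordinal N0))); rewrite E.
have := proj1 (min_seqP x t); rewrite -E => /mapP [m _ ->]; by exists m.
Qed.

Lemma maxI_ex (f : 'I_N -> R) : (0 < N)%N -> exists m, maxI f = f m.
Proof.
move=> N0; rewrite /maxI; case E: [seq f m | m <- enum 'I_N] => [|x t].
  by move: (map_f f (mem_enum predT (Ordinal N0))); rewrite E.
have := proj1 (max_seqP x t); rewrite -E => /mapP [m _ ->]; by exists m.
Qed.
End PD.


Section PE.
Variable R : realType.
Local Notation C := (R[i]).

Lemma real_C (x : C) : x \is Num.real -> x = (complex.Re x)%:C.
Proof.
case: x => a b; rewrite CrealE => /eqP [hb].
apply/eqP; rewrite eq_complex /= eqxx /=; apply/eqP; lra.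
Qed.

Lemma rcB (a b : R) : (a - b)%:C = a%:C - b%:C :> C.
Proof. by apply/eqP; rewrite eq_complex /=; apply/andP; split; apply/eqP; ring. Qed.

Lemma cadjM m n p (A : 'M[C]_(m,n)) (B : 'M[C]_(n,p)) : adj (A *m B) = adj B *m adj A.
Proof. by rewrite /adj map_mxM trmx_mul. Qed.

Lemma cadjK m n (A : 'M[C]_(m,n)) : adj (adj A) = A.
Proof. by apply/matrixP => i j; rewrite /adj !mxE conjcK. Qed.

Lemma cadjZ m n a (A : 'M[C]_(m,n)) : adj (a *: A) = conjc a *: adj A.
Proof. by apply/matrixP => i j; rewrite /adj !mxE rmorphM. Qed.

Lemma cadjD m n (A B : 'M[C]_(m,n)) : adj (A + B) = adj A + adj B.
Proof. by apply/matrixP => i j; rewrite /adj !mxE rmorphD. Qed.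

Lemma tstar_adj m n (A : 'M[C]_(m,n)) : (A ^t*)%sesqui = adj A.
Proof. by rewrite /adj map_trmx. Qed.

Lemma herm_min (n : nat) (A : 'M[C]_n) : (0 < n)%N -> adj A = A ->
  exists l : R, is_min_eigenvalue A l /\
    (forall x : 'cV[C]_n, l%:C * (adj x *m x) 0 0 <= (adj x *m A *m x) 0 0) /\
    (exists x : 'cV[C]_n, (adj x *m x) 0 0 = 1 /\ (adj x *m A *m x) 0 0 = l%:C).
Proof.
move=> n0 hA.
have hAt : (A ^t*)%sesqui = A by rewrite tstar_adj.
have hnorm : A \is normalmx by apply/normalmxP; rewrite hAt.
have hher : A \is hermsymmx by rewrite is_hermitianmxE expr0 scale1r hAt.
set P := spectralmx A; set d := spectral_diag A.
have /orthomx_spectralP hAe := hnorm.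
have hPu : P *m adj P = 1%:M.
  by rewrite -tstar_adj; apply/unitarymxP; exact: spectral_unitarymx.
have hPu' : adj P *m P = 1%:M by exact: mulmx1C.
have hinv : invmx P = adj P by rewrite invmx_unitary ?spectral_unitarymx // tstar_adj.
rewrite -/P -/d hinv in hAe.
have hdr : forall j, d 0 j = (complex.Re (d 0 j))%:C.
  move=> j; apply: real_C.
  by have /mxOverP /(_ 0 j) := hermitian_spectral_diag_real hher.
set dr := fun j => complex.Re (d 0 j).
have [j0 hj0] := minI_ex dr n0.
exists (minI dr).
have hq : forall x : 'cV[C]_n, (adj x *m A *m x) 0 0 =
    \sum_j conjc ((P *m x) j 0) * d 0 j * (P *m x) j 0.
  move=> x; rewrite hAe.
  have -> : adj x *m (adj P *m diag_mx d *m P) *m x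
          = adj (P *m x) *m diag_mx d *m (P *m x) by rewrite cadjM !mulmxA.
  by rewrite mxE; apply: eq_bigr => j _; rewrite mul_mx_diag !mxE.
have hn : forall x : 'cV[C]_n, (adj x *m x) 0 0 =
    \sum_j conjc ((P *m x) j 0) * (P *m x) j 0.
  move=> x; have -> : adj x *m x = adj (P *m x) *m (P *m x).
    by rewrite cadjM mulmxA -(mulmxA (adj x)) hPu' mulmx1.
  by rewrite mxE; apply: eq_bigr => j _; rewrite !mxE.
have hrow : row j0 P *m A = (minI dr)%:C *: row j0 P.
  rewrite hAe !mulmxA -row_mul hPu row1 -rowE row_diag_mx -scalemxAl -rowE.
  by rewrite hdr -/(dr j0) -hj0.
have hrow0 : row j0 P != 0.
  apply/eqP => h0; have := congr1 (fun M => M *m adj P) h0.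
  rewrite mul0mx -row_mul hPu row1 => /matrixP /(_ 0 j0); rewrite !mxE !eqxx /=.
  by move/eqP; rewrite oner_eq0.
split.
  split; first by apply/eigenvalueP; exists (row j0 P).
  move=> a /eigenvalueP [v hv vn0].
  set w := v *m adj P.
  have hw : w *m diag_mx d = a *: w.
    have := congr1 (fun M => M *m adj P) hv.
    by rewrite hAe !mulmxA -(mulmxA _ P) hPu mulmx1 -scalemxAl.
  have wn0 : w != 0.
    apply: contraNneq vn0 => hw0.
    by rewrite -(mulmx1 v) -hPu' mulmxA -/w hw0 mul0mx.
  clearbody w.
  have [j hj] : exists j, w 0 j != 0.
    case: (pickP (fun j => w 0 j != 0)) => [j hj|hnone]; first by exists j.
    case/eqP: wn0; apply/matrixP => i k; rewrite ord1 [X in _ = X]mxE.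
    by move: (hnone k) => /= /negbFE /eqP.
  have := congr1 (fun M : 'M[C]_(1,n) => M 0 j) hw; rewrite mul_mx_diag !mxE mulrC => e.
  have <- := mulIf hj e.
  by rewrite hdr lecR; exact: minI_le.
split.
  move=> x; rewrite hq hn mulr_sumr -subr_ge0 -sumrB; apply: sumr_ge0 => j _.
  rewrite hdr.
  have h0 : (0:C) <= (dr j - minI dr)%:C.
    have h := lecR (0:R) (dr j - minI dr).
    rewrite subr_ge0 minI_le in h; exact: h.
  have -> : conjc ((P *m x) j 0) * (complex.Re (d 0 j))%:C * (P *m x) j 0 -
     (minI dr)%:C * (conjc ((P *m x) j 0) * (P *m x) j 0)
     = (dr j - minI dr)%:C * ((P *m x) j 0 * conjc ((P *m x) j 0)).
    rewrite rcB /dr; ring.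
  by apply: mulr_ge0 => //; exact: mulcJ_ge0.
exists (adj (row j0 P)); rewrite cadjK; split.
  have := congr1 (fun M : 'M[C]_n => M j0 j0) hPu; rewrite !mxE eqxx /= => e.
  by etransitivity; last exact: e; apply: eq_bigr => k _; rewrite !mxE.
have := congr1 (fun M : 'M[C]_n => M j0 j0) hPu; rewrite !mxE eqxx /= => e.
have h1 : (row j0 P *m adj (row j0 P)) 0 0 = 1.
  by rewrite mxE; etransitivity; last exact: e; apply: eq_bigr => k _; rewrite !mxE.
rewrite hrow; under eq_bigr do rewrite [X in X * _]mxE -mulrA.
by rewrite -mulr_sumr; move: h1; rewrite mxE => ->; rewrite mulr1.
Qed.
End PE.


Section PF.
Variable R : realType.
Local Notation C := (R[i]).
Variable N : nat.

Lemma qfD (x : 'cV[C]_N) M1 M2 : qf x (M1 + M2) = qf x M1 + qf x M2.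
Proof. by rewrite /qf mulmxDr mulmxDl mxE. Qed.

Lemma qfZ (x : 'cV[C]_N) c M : qf x (c *: M) = c * qf x M.
Proof. by rewrite /qf -scalemxAr -scalemxAl mxE. Qed.

Lemma qf0 (x : 'cV[C]_N) : qf x 0 = 0.
Proof. by rewrite /qf mulmx0 mul0mx mxE. Qed.

Lemma qf_sum (x : 'cV[C]_N) (I : Type) (r : seq I) (P : pred I) (F : I -> 'M[C]_N) :
  qf x (\sum_(j <- r | P j) F j) = \sum_(j <- r | P j) qf x (F j).
Proof. exact: (big_morph (qf x) (qfD x) (qf0 x)). Qed.

Lemma cadj0 : adj (0 : 'M[C]_N) = 0.
Proof. by apply/matrixP => a b; rewrite /adj !mxE rmorph0. Qed.

Lemma cadj_sum (I : Type) (r : seq I) (P : pred I) (F : I -> 'M[C]_N) :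
  adj (\sum_(j <- r | P j) F j) = \sum_(j <- r | P j) adj (F j).
Proof. exact: (big_morph (@adj R N N) (@cadjD R N N) cadj0). Qed.

Lemma qfZx (x : 'cV[C]_N) c M : qf (c *: x) M = conjc c * c * qf x M.
Proof. by rewrite /qf cadjZ -scalemxAl -scalemxAl -scalemxAr scalerA mxE. Qed.

Definition nrm (M : 'M[C]_N) (x : 'cV[C]_N) (m : 'I_N) : C :=
  conjc ((M *m x) m 0) * (M *m x) m 0.

Lemma nrm_ge0 M x m : 0 <= nrm M x m.
Proof. by rewrite /nrm mulrC; exact: mulcJ_ge0. Qed.

Lemma qf_rank1 (M : 'M[C]_N) (c : R) (m : 'I_N) (x : 'cV[C]_N) :
  qf x (adj M *m (\matrix_(a, b) (if (a == m) && (b == m) then c%:C else 0)) *m M)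
  = c%:C * nrm M x m.
Proof.
have -> : (\matrix_(a, b) (if (a == m) && (b == m) then c%:C else 0) : 'M[C]_N)
    = c%:C *: (delta_mx m (0 : 'I_1) *m delta_mx 0 m).
  rewrite mul_delta_mx; apply/matrixP => a b; rewrite !mxE.
  by case: (a == m); case: (b == m); rewrite /= ?mulr1 ?mulr0.
rewrite -scalemxAr -scalemxAl qfZ; congr (_ * _).
rewrite /qf !mulmxA -cadjM -colE -!mulmxA -rowE.
by rewrite mxE big_ord1 /nrm /adj !mxE.
Qed.

Lemma rc_ge0 (r : R) : 0 <= r -> (0 : C) <= r%:C.
Proof. by move=> h; have := lecR 0 r; rewrite h. Qed.

Lemma rcD (a b : R) : (a + b)%:C = a%:C + b%:C :> C.
Proof. by apply/eqP; rewrite eq_complex /=; apply/andP; split; apply/eqP; ring. Qed.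

Lemma conj_ge0' (z : C) : 0 <= z -> conjc z = z.
Proof. by move=> h; rewrite (real_C (ger0_real h)) conjc_real. Qed.

Lemma nrm_sum (M : 'M[C]_N) x : adj M *m M = 1%:M ->
  \sum_m nrm M x m = (adj x *m x) 0 0.
Proof.
move=> h; have -> : adj x *m x = adj (M *m x) *m (M *m x).
  by rewrite cadjM mulmxA -(mulmxA (adj x)) h mulmx1.
rewrite [RHS]mxE; apply: eq_bigr => m _. by rewrite /nrm /adj [X in _ = X * _]mxE [X in _ = X * _]mxE.
Qed.

Lemma nrm_delta (M : 'M[C]_N) m0 m : M *m adj M = 1%:M ->
  nrm M (adj M *m delta_mx m0 (0 : 'I_1)) m = (m == m0)%:R.
Proof.
move=> h; rewrite /nrm mulmxA h mul1mx !mxE eqxx andbT.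
by rewrite conjc_nat -natrM; case: (m == m0).
Qed.

Lemma sum_pick (f : 'I_N -> C) m0 : \sum_m f m * (m == m0)%:R = f m0.
Proof.
rewrite (bigD1 m0) //= eqxx mulr1 big1 ?addr0 // => m /negbTE ->.
by rewrite mulr0.
Qed.

Lemma inv_sqrt_le (u v : R) : 0 < u -> u <= v -> (Num.sqrt v)^-1 <= (Num.sqrt u)^-1.
Proof.
move=> hu huv; have hv : 0 < v := lt_le_trans hu huv.
by rewrite lef_pV2 ?posrE ?sqrtr_gt0 // ler_sqrt // ltW.
Qed.

Lemma lamC (c : R) (z : C) : 0 <= z -> (c * complex.Re z)%:C = c%:C * z.
Proof. by move=> h; rewrite -rcM -real_C //; exact: ger0_real. Qed.

Lemma Re_ge0 (z : C) : 0 <= z -> 0 <= complex.Re z.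
Proof. by rewrite lecE => /andP [_ h]. Qed.
End PF.


Section PH.
Variable R : realType.
Local Notation C := (R[i]).
Variables (N K : nat) (i : 'I_K) (s : 'I_K -> 'cV[C]_N).

Lemma hQ (m : 'I_N) (y : 'cV[C]_N) : qf y (Qmx m) = (cc m)%:C * nrm Vmx y m.
Proof. by rewrite /Qmx /Cmx qf_rank1. Qed.
Lemma hQh (m : 'I_N) (y : 'cV[C]_N) : qf y (Qhmx m) = (cch m)%:C * nrm Vhmx y m.
Proof. by rewrite /Qhmx /Chmx qf_rank1. Qed.

Lemma cc_ge0 (m : 'I_N) : 0 <= (cc m : R).
Proof. by rewrite /cc sqrtr_ge0. Qed.
Lemma cch_ge0 (m : 'I_N) : 0 <= (cch m : R).
Proof. by rewrite /cch sqrtr_ge0. Qed.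

Lemma hqQ (m : 'I_N) (y : 'cV[C]_N) : 0 <= qf y (Qmx m).
Proof. by rewrite hQ; apply: mulr_ge0; [exact/rc_ge0/cc_ge0 | exact: nrm_ge0]. Qed.
Lemma hqQh (m : 'I_N) (y : 'cV[C]_N) : 0 <= qf y (Qhmx m).
Proof. by rewrite hQh; apply: mulr_ge0; [exact/rc_ge0/cch_ge0 | exact: nrm_ge0]. Qed.

Definition asum m := \sum_(k < K | k != i) qf (s k) (Qmx m).
Definition ahsum m := \sum_(k < K | k != i) qf (s k) (Qhmx m).

Lemma asum_ge0 m : 0 <= asum m.
Proof. by apply: sumr_ge0 => k _; exact: hqQ. Qed.
Lemma ahsum_ge0 m : 0 <= ahsum m.
Proof. by apply: sumr_ge0 => k _; exact: hqQh. Qed.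

Definition lamf m := cc m * complex.Re (asum m).
Definition lamhf m := cch m * complex.Re (ahsum m).

Lemma lamf_ge0 m : 0 <= lamf m.
Proof. by apply: mulr_ge0; [exact: cc_ge0 | apply: Re_ge0; exact: asum_ge0]. Qed.
Lemma lamhf_ge0 m : 0 <= lamhf m.
Proof. by apply: mulr_ge0; [exact: cch_ge0 | apply: Re_ge0; exact: ahsum_ge0]. Qed.

Definition Sig : 'M[C]_N := \sum_(k < K | k != i) \sum_(m < N)
    (qf (s k) (Qmx m) *: Qmx m + qf (s k) (Qhmx m) *: Qhmx m).

Lemma lamfC m : (lamf m)%:C = (cc m)%:C * asum m.
Proof. by apply: lamC; exact: asum_ge0. Qed.
Lemma lamhfC m : (lamhf m)%:C = (cch m)%:C * ahsum m.
Proof. by apply: lamC; exact: ahsum_ge0. Qed.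

Lemma arr (a1 a2 c1 c2 n1 n2 : C) :
  a1 * (c1 * n1) + a2 * (c2 * n2) = c1 * a1 * n1 + c2 * a2 * n2.
Proof. by ring. Qed.
Lemma arr2 (a b c d : C) : a * b + c * d = b * a + d * c.
Proof. by ring. Qed.

Lemma sum_lin2 (I : Type) (r : seq I) (P : pred I) (f f' : I -> C) (g g' : C) :
  \sum_(k <- r | P k) (f k * g + f' k * g') =
  (\sum_(k <- r | P k) f k) * g + (\sum_(k <- r | P k) f' k) * g'.
Proof. by rewrite big_split !mulr_suml. Qed.

Lemma hqS (x : 'cV[C]_N) : qf x Sig =
    \sum_m ((lamf m)%:C * nrm Vmx x m + (lamhf m)%:C * nrm Vhmx x m).
Proof.
rewrite /Sig qf_sum.
under eq_bigr do rewrite qf_sum.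
under eq_bigr do under eq_bigr do rewrite qfD !qfZ.
rewrite exchange_big /=; apply: eq_bigr => m _.
rewrite sum_lin2.
rewrite (hQ m x) (hQh m x).
rewrite arr; congr (_ * _ + _ * _); apply/esym; [exact: lamfC | exact: lamhfC].
Qed.

Lemma hSm (x : 'cV[C]_N) :
  \sum_(k < K | k != i) \sum_(m < N) Smik x (s k) m = qf x Sig.
Proof.
rewrite /Sig qf_sum; apply: eq_bigr => k _; rewrite qf_sum.
by apply: eq_bigr => m _; rewrite qfD !qfZ /Smik; exact: arr2.
Qed.

Lemma adjCm (m : 'I_N) (c : R) :
  adj (\matrix_(a, b) (if (a == m) && (b == m) then c%:C else 0) : 'M[C]_N)
  = \matrix_(a, b) (if (a == m) && (b == m) then c%:C else 0).
Proof.
apply/matrixP => a b; rewrite /adj !mxE andbC.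
by case: ((a == m) && (b == m)); rewrite ?conjc_real ?rmorph0.
Qed.

Lemma adjQ (m : 'I_N) : adj (@Qmx R N m) = Qmx m.
Proof. by rewrite /Qmx /Cmx !cadjM cadjK adjCm mulmxA. Qed.
Lemma adjQh (m : 'I_N) : adj (@Qhmx R N m) = Qhmx m.
Proof. by rewrite /Qhmx /Chmx !cadjM cadjK adjCm mulmxA. Qed.

Lemma adjSig : adj Sig = Sig.
Proof.
rewrite /Sig cadj_sum; apply: eq_bigr => k _; rewrite cadj_sum.
apply: eq_bigr => m _; rewrite cadjD !cadjZ adjQ adjQh !conj_ge0' //.
  exact: hqQh.
exact: hqQ.
Qed.

Lemma sum_ge_split (p q u v : 'I_N -> C) (a b : C) :
  (forall j, a * p j <= u j) -> (forall j, b * q j <= v j) ->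
  a * (\sum_j p j) + b * (\sum_j q j) <= \sum_j (u j + v j).
Proof.
move=> h1 h2; rewrite big_split !mulr_sumr.
by apply: lerD; apply: ler_sum => j _.
Qed.

Lemma sum_le_split (u v : 'I_N -> C) (a b : C) :
  \sum_j u j = a -> \sum_j v j <= b -> \sum_j (u j + v j) <= a + b.
Proof. by move=> h1 h2; rewrite big_split h1 lerD2l. Qed.

Lemma lowS (x : 'cV[C]_N) :
  (minI lamf + minI lamhf)%:C * (adj x *m x) 0 0 <= qf x Sig.
Proof.
rewrite hqS rcD mulrDl -{1}(nrm_sum x (V_unit' R N)) -(nrm_sum x (Vh_unit' R N)).
apply: sum_ge_split => m; (apply: ler_wpM2r; first exact: nrm_ge0);
  rewrite lecR; exact: minI_le.
Qed.

Lemma upS1 (l : R) : (0 < N)%N ->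
  (forall x, l%:C * (adj x *m x) 0 0 <= qf x Sig) -> l <= minI lamf + maxI lamhf.
Proof.
move=> N0 H; have [m0 hm0] := minI_ex lamf N0.
pose x := adj (@Vmx R N) *m delta_mx m0 (0 : 'I_1).
have hd : forall m, nrm Vmx x m = (m == m0)%:R by move=> m; apply: nrm_delta; exact: V_unit.
have hx1 : (adj x *m x) 0 0 = 1.
  rewrite -(nrm_sum x (V_unit' R N)).
  rewrite (eq_bigr (fun m => 1 * (m == m0)%:R)); first exact: sum_pick.
  by move=> m _; rewrite hd mul1r.
have e1 : \sum_m (lamf m)%:C * nrm Vmx x m = (lamf m0)%:C.
  by under eq_bigr do rewrite hd; exact: sum_pick.
have e2 : \sum_m (lamhf m)%:C * nrm Vhmx x m <= (maxI lamhf)%:C.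
  rewrite -[X in _ <= X]mulr1 -hx1 -(nrm_sum x (Vh_unit' R N)) mulr_sumr.
  apply: ler_sum => m _; apply: ler_wpM2r; first exact: nrm_ge0.
  rewrite lecR; exact: maxI_ge.
have := H x; rewrite hx1 mulr1 hqS => h.
rewrite -lecR rcD hm0; apply: le_trans h _; exact: sum_le_split e1 e2.
Qed.

Lemma upS2 (l : R) : (0 < N)%N ->
  (forall x, l%:C * (adj x *m x) 0 0 <= qf x Sig) -> l <= maxI lamf + minI lamhf.
Proof.
move=> N0 H; have [m0 hm0] := minI_ex lamhf N0.
pose x := adj (@Vhmx R N) *m delta_mx m0 (0 : 'I_1).
have hd : forall m, nrm Vhmx x m = (m == m0)%:R by move=> m; apply: nrm_delta; exact: Vh_unit.
have hx1 : (adj x *m x) 0 0 = 1.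
  rewrite -(nrm_sum x (Vh_unit' R N)).
  rewrite (eq_bigr (fun m => 1 * (m == m0)%:R)); first exact: sum_pick.
  by move=> m _; rewrite hd mul1r.
have e1 : \sum_m (lamhf m)%:C * nrm Vhmx x m = (lamhf m0)%:C.
  by under eq_bigr do rewrite hd; exact: sum_pick.
have e2 : \sum_m (lamf m)%:C * nrm Vmx x m <= (maxI lamf)%:C.
  rewrite -[X in _ <= X]mulr1 -hx1 -(nrm_sum x (V_unit' R N)) mulr_sumr.
  apply: ler_sum => m _; apply: ler_wpM2r; first exact: nrm_ge0.
  rewrite lecR; exact: maxI_ge.
have := H x; rewrite hx1 mulr1 hqS => h.
rewrite -lecR rcD hm0 addrC; apply: le_trans h _.
under eq_bigr do rewrite addrC.
exact: sum_le_split e1 e2.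
Qed.
End PH.


Unset Implicit Arguments.
Theorem mainTheorem2 (R : realType) (N K : nat) (N0 P T : R) (i : 'I_K)
    (s : 'I_K -> 'cV[R[i]]_N) :
  (2 <= N)%N -> (2 <= K)%N -> 0 < N0 -> 0 < P -> 0 < T ->
  let lam := fun m : 'I_N =>
    cc m * complex.Re (\sum_(k < K | k != i) qf (s k) (Qmx m)) in
  let lamh := fun m : 'I_N =>
    cch m * complex.Re (\sum_(k < K | k != i) qf (s k) (Qhmx m)) in
  let Sigma : 'M[R[i]]_N := \sum_(k < K | k != i) \sum_(m < N)
    (qf (s k) (Qmx m) *: Qmx m + qf (s k) (Qhmx m) *: Qhmx m) in
  let noise := N0 / (2 * P * T) in
  let obj := fun x : 'cV[R[i]]_N =>
    (Num.sqrt (1 / (6 * (N%:R) ^+ 2) *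
       complex.Re (\sum_(k < K | k != i) \sum_(m < N) Smik x (s k) m)
       + noise))^-1 in
  let gamma := Num.min (minI lam + maxI lamh) (maxI lam + minI lamh) in
  exists lmin : R,
    is_min_eigenvalue Sigma lmin /\
    minI lam + minI lamh <= lmin <= gamma /\
    exists SINRstar : R,
      is_max_on_sphere obj SINRstar /\
      (Num.sqrt (gamma / (6 * N%:R) + noise))^-1 <= SINRstar /\
      SINRstar <= (Num.sqrt ((minI lam + minI lamh) / (6 * N%:R) + noise))^-1.
Proof.
move=> hN hK hN0 hP hT lam lamh Sigma noise obj gamma.
have N0' : (0 < N)%N by apply: leq_trans hN.
have NR : (0:R) < N%:R by rewrite ltr0n.
have [l [hE [hR1 hR2]]] := herm_min N0' (adjSig i s).
have [x1 [hx1 hq1]] := hR2.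
have hlow : minI (lamf i s) + minI (lamhf i s) <= l.
  by have := lowS i s x1; rewrite /qf hx1 hq1 mulr1 lecR.
have hup1 := upS1 N0' hR1.
have hup2 := upS2 N0' hR1.
have hmin0 : 0 <= minI (lamf i s) + minI (lamhf i s).
  have [m1 hm1] := minI_ex (lamf i s) N0'.
  have [m2 hm2] := minI_ex (lamhf i s) N0'.
  by rewrite hm1 hm2 addr_ge0 // ?lamf_ge0 ?lamhf_ge0.
have hlg : l <= gamma by rewrite /gamma le_min hup1 hup2.
have noise_gt0 : 0 < noise by rewrite /noise divr_gt0 // !mulr_gt0.
have l_ge0 : 0 <= l := le_trans hmin0 hlow.
have h6 : (0:R) < 6 * N%:R by rewrite mulr_gt0.
have hpos : forall u : R, 0 <= u -> 0 < u / (6 * N%:R) + noise.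
  move=> u hu; have : 0 <= u / (6 * N%:R) by rewrite divr_ge0 // ltW.
  move=> h; lra.
exists l; split; first exact: hE.
split; first by apply/andP; split.
exists ((Num.sqrt (l / (6 * N%:R) + noise))^-1).
split; last first.
  split.
    apply: inv_sqrt_le; first exact: hpos.
    by rewrite lerD2r ler_wpM2r // invr_ge0 ltW.
  apply: inv_sqrt_le; first exact: hpos.
  by rewrite lerD2r ler_wpM2r // invr_ge0 ltW.
split.
  pose c := Num.sqrt (N%:R : R).
  have hcc : c * c = N%:R by rewrite /c -expr2 sqr_sqrtr // ler0n.
  exists (c%:C *: x1); split.
    have -> : (adj (c%:C *: x1) *m (c%:C *: x1)) 0 0 = qf (c%:C *: x1) 1%:M.
      by rewrite /qf mulmx1.
    rewrite qfZx /qf mulmx1 hx1 mulr1 conjc_real rcM hcc.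
    by rewrite natrC.
  rewrite /obj (hSm i s) qfZx; rewrite /qf hq1 conjc_real !rcM /= hcc.
  congr (Num.sqrt _)^-1; congr (_ + _).
  field; rewrite lt0r_neq0 //.
move=> x hx.
rewrite /obj (hSm i s).
apply: inv_sqrt_le; first exact: hpos.
rewrite lerD2r.
have := hR1 x; rewrite hx natrC rcM lecE => /andP [_ /= hre].
have -> : l / (6 * N%:R) = 1 / (6 * N%:R ^+ 2) * (l * N%:R) by field; rewrite lt0r_neq0.
apply: ler_wpM2l; last exact: hre.
by rewrite divr_ge0 // ltW // mulr_gt0 // exprn_gt0.
Qed.
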